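(* Let $(e,f)$ be an edge of $\Sigma$ contained in the two triangles $\sigma=(e,f,g)$ and $\sigma'=(e,f,g')$, and suppose $(e,f)$ is carved out by the ratio $m:m'$ with $m,m'$ coprime monomials in $R$, labelled so that $g(m'/m)>0$. Let $\Gamma_\sigma=\{r_\chi\}_{\chi\in G^\vee}$ and $\Gamma_{\sigma'}=\{r'_\chi\}_{\chi\in G^\vee}$ be the $G$-graphs of the charts $A_\sigma$, $A_{\sigma'}$. If $r_\chi\neq r'_\chi$ for some $\chi\in G^\vee$, then $m\mid r_\chi$ and $m'\mid r'_\chi$.
   Context: $G\subset SL_3(\mathbb{C})$ finite abelian, $R=\mathbb{C}[x,y,z]$; $Y=G\text{-Hilb}(\mathbb{C}^3)$ with universal family $\mathcal{M}$ normalised so that $\mathcal{M}^G\cong\mathcal{O}_Y$ (viewing $\mathcal{M}$ as a sheaf of $(R\rtimes G)\otimes\mathcal{O}_Y$-modules on $Y$). Laurent monomials $x^{m_1}y^{m_2}z^{m_3}$ are identified with $(m_1,m_2,m_3)\in\mathbb{Z}^3$; $M$ is the sublattice of $G$-invariant Laurent monomials and $L\subset\mathbb{Q}^3$ its dual lattice, with pairing $e(m)=\sum e_im_i$; for $e\in L$ and a Laurent monomial $m$, $e(m)$ equals the ($\mathbb{Q}$-)valuation of $m$ along the toric divisor $E_e$. $Y$ is the toric variety given by a triangulation $\Sigma$ of the junior simplex $\Delta=\{e\in\mathbb{R}^3_{\ge0}:\sum e_i=1\}$ with vertices $L\cap\Delta$; a triangle $\sigma$ of $\Sigma$ gives an affine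 toric chart $A_\sigma\cong\mathbb{C}^3$ with torus fixed point $E_\sigma$. An edge $(e,f)$ of $\Sigma$ is carved out by $m:m'$ if $m,m'$ are coprime monomials in $R$ with $m/m'$ generating the rank-one sublattice of $M$ orthogonal to $e$ and $f$. There is a unique embedding of $\mathcal{M}$ as $(R\rtimes G)\otimes\mathcal{O}_Y$-modules into the constant sheaf $\mathbb{C}(x,y,z)$ restricting to the identity on $\mathcal{O}_Y=\mathcal{M}^G$; under it, for each $\chi\in G^\vee$ the isotypic summand of $\mathcal{M}$ of character $\chi$ is, on each chart $A_\sigma$, generated as an $\mathcal{O}_Y$-module by a unique monomial $r_\chi$ of character $\chi$. The set $\Gamma_\sigma=\{r_\chi\}_{\chi\in G^\vee}$ is the $G$-graph of $A_\sigma$; it is exactly the set of monomials of $R$ not lying in the ideal of the $G$-cluster parametrised by $E_\sigma$. *)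

(* Defs.v *)
From HB Require Import structures.
From mathcomp Require Import all_boot all_order all_algebra all_field.
Set Implicit Arguments. Unset Strict Implicit. Unset Printing Implicit Defensive.
Import Order.TTheory GRing.Theory Num.Theory.
Local Open Scope ring_scope.

(* Laurent monomials x^a y^b z^c  <->  (a,b,c) in Z^3 *)
Definition lmon := (int * int * int)%type.
(* monomials of R = C[x,y,z]  <->  (a,b,c) in N^3 *)
Definition nmon := (nat * nat * nat)%type.
(* points of Q^3 (the ambient space of L) *)
Definition pt := (rat * rat * rat)%type.
(* elements of G: diagonal matrices diag(a,b,c) *)
Definition gelt := (algC * algC * algC)%type.

Definition toL (n : nmon) : lmon := ((n.1.1)%:Z, (n.1.2)%:Z, (n.2)%:Z).
(* quotient of Laurent monomials u / v *)
Definition ldiv (u v : lmon) : lmon := (u.1.1 - v.1.1, u.1.2 - v.1.2, u.2 - v.2).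

Definition pairing (e : pt) (u : lmon) : rat :=
  e.1.1 * (u.1.1)%:~R + e.1.2 * (u.1.2)%:~R + e.2 * (u.2)%:~R.

(* value at g of the character of G by which G acts on the monomial u *)
Definition chr (g : gelt) (u : lmon) : algC :=
  g.1.1 ^ u.1.1 * g.1.2 ^ u.1.2 * g.2 ^ u.2.

Definition gmul (g h : gelt) : gelt := (g.1.1 * h.1.1, g.1.2 * h.1.2, g.2 * h.2).

(* G is a finite (listed) subgroup of the diagonal matrices of SL_3(C):
   contains 1, closed under products (hence a group, being finite and
   consisting of invertible elements), every element has determinant 1. *)
Definition diag_SL3_group (G : seq gelt) : Prop :=
  [/\ (1, 1, 1) \in G,
      (forall g h, g \in G -> h \in G -> gmul g h \in G) &
      (forall g, g \in G -> g.1.1 * g.1.2 * g.2 = 1)].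

Definition inM (G : seq gelt) (u : lmon) : Prop :=
  forall g, g \in G -> chr g u = 1.

Definition samechar (G : seq gelt) (u v : lmon) : Prop :=
  forall g, g \in G -> chr g u = chr g v.

Definition inL (G : seq gelt) (e : pt) : Prop :=
  forall u, inM G u -> pairing e u \is a Num.int.

Definition inDelta (e : pt) : Prop :=
  [/\ 0 <= e.1.1, 0 <= e.1.2, 0 <= e.2 & e.1.1 + e.1.2 + e.2 = 1].

Definition ptadd (p q : pt) : pt := (p.1.1 + q.1.1, p.1.2 + q.1.2, p.2 + q.2).
Definition ptscale (a : rat) (p : pt) : pt := (a * p.1.1, a * p.1.2, a * p.2).

Definition det3 (a b c : pt) : rat :=
  a.1.1 * (b.1.2 * c.2 - b.2 * c.1.2)
  - a.1.2 * (b.1.1 * c.2 - b.2 * c.1.1)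
  + a.2 * (b.1.1 * c.1.2 - b.1.2 * c.1.1).

Definition triangle := (pt * pt * pt)%type.
Definition tverts (t : triangle) : seq pt := [:: t.1.1; t.1.2; t.2].

Definition convex_comb (t : triangle) (a b c : rat) (p : pt) : Prop :=
  [/\ 0 <= a, 0 <= b, 0 <= c, a + b + c = 1 &
      p = ptadd (ptadd (ptscale a t.1.1) (ptscale b t.1.2)) (ptscale c t.2)].

Definition in_hull (t : triangle) (p : pt) : Prop :=
  exists a b c, convex_comb t a b c p.

Definition triangulation (G : seq gelt) (S : seq triangle) : Prop :=
  [/\
      (forall t, t \in S ->
         (forall v, v \in tverts t -> inL G v /\ inDelta v) /\
         det3 t.1.1 t.1.2 t.2 != 0),
      (forall v, inL G v -> inDelta v -> exists2 t, t \in S & v \in tverts t),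
      (forall p, inDelta p -> exists2 t, t \in S & in_hull t p) &
      (* two triangles meet in a common face *)
      (forall t t' p, t \in S -> t' \in S -> in_hull t p -> in_hull t' p ->
         exists a b c, convex_comb t a b c p /\
           [/\ a != 0 -> t.1.1 \in tverts t',
               b != 0 -> t.1.2 \in tverts t' &
               c != 0 -> t.2 \in tverts t'])].

Definition tri_in (S : seq triangle) (e f g : pt) : Prop :=
  exists2 t, t \in S & perm_eq (tverts t) [:: e; f; g].

(* r in R generates, on the chart A_sigma (sigma = (e,f,g)), the isotypic summand
   of the universal family of the character of r: every monomial n of R with the
   same character equals r times a regular function n/r in C[sigma^vee cap M],
   i.e. e(n/r), f(n/r), g(n/r) >= 0.  Then r = r_chi, an element of Gamma_sigma. *)
Definition Ggraph_elt (G : seq gelt) (e f g : pt) (r : nmon) : Prop :=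
  forall n : nmon, samechar G (toL n) (toL r) ->
    [/\ 0 <= pairing e (ldiv (toL n) (toL r)),
        0 <= pairing f (ldiv (toL n) (toL r)) &
        0 <= pairing g (ldiv (toL n) (toL r))].

(* Y = G-Hilb: on every chart, each character chi has its generator r_chi *)
Definition GHilb_family (G : seq gelt) (S : seq triangle) : Prop :=
  forall t, t \in S -> forall u : lmon,
    exists r : nmon, samechar G (toL r) u /\ Ggraph_elt G t.1.1 t.1.2 t.2 r.

Definition mcoprime (m m' : nmon) : Prop :=
  [/\ minn m.1.1 m'.1.1 = 0, minn m.1.2 m'.1.2 = 0 & minn m.2 m'.2 = 0]%N.

Definition mdvd (m r : nmon) : Prop :=
  [/\ m.1.1 <= r.1.1, m.1.2 <= r.1.2 & m.2 <= r.2]%N.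

Definition lscale (k : int) (u : lmon) : lmon := (k * u.1.1, k * u.1.2, k * u.2).

Definition carved (G : seq gelt) (e f : pt) (m m' : nmon) : Prop :=
  [/\ mcoprime m m',
      inM G (ldiv (toL m) (toL m')),
      pairing e (ldiv (toL m) (toL m')) = 0,
      pairing f (ldiv (toL m) (toL m')) = 0 &
      (forall u, inM G u -> pairing e u = 0 -> pairing f u = 0 ->
         exists k : int, u = lscale k (ldiv (toL m) (toL m')))].

(* Main.v *)
Require Import Defs.
From HB Require Import structures.
From Stdlib Require Import Lia Psatz.
From mathcomp Require Import all_boot all_order all_algebra all_field.
Import Order.TTheory GRing.Theory Num.Theory.
Local Open Scope ring_scope.
Lemma powsub (x : algC) (a b : nat) : x != 0 ->
  x ^ (a%:Z - b%:Z) = x ^+ a / x ^+ b.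
Proof.
move=> hx; rewrite expfzDr // -invr_expz //.
Qed.

Lemma samechar_inM G (u v : nmon) : diag_SL3_group G ->
  samechar G (toL u) (toL v) -> inM G (ldiv (toL u) (toL v)).
Proof.
move=> [_ _ Hdet] Hs g Hg.
have := Hdet g Hg; have := Hs g Hg.
rewrite /chr /ldiv /toL /=.
case: g Hg => [[x y] z] Hg /= Heq Hd.
have hx : x != 0 by apply/eqP=> h; move: Hd; rewrite h !mul0r => /eqP; rewrite eq_sym oner_eq0.
have hy : y != 0 by apply/eqP=> h; move: Hd; rewrite h mulr0 mul0r => /eqP; rewrite eq_sym oner_eq0.
have hz : z != 0 by apply/eqP=> h; move: Hd; rewrite h mulr0 => /eqP; rewrite eq_sym oner_eq0.
rewrite !powsub //.
have Heq' : x^+u.1.1 * y^+u.1.2 * z^+u.2 = x^+v.1.1 * y^+v.1.2 * z^+v.2 := Heq.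
rewrite !mulf_div Heq' divff // !mulf_neq0 // expf_neq0 //.
Qed.

Lemma coord (a b c d n : nat) : minn c d = 0%N ->
  a%:Z - b%:Z = - (n.+1)%:Z * (c%:Z - d%:Z) -> (c <= b)%N /\ (d <= a)%N.
Proof.
move=> Hm H; have NP : (0 < n.+1)%N by []. set N := n.+1 in H NP *. clearbody N.
have E : (a + N * c)%N = (b + N * d)%N.
  apply/eqP; rewrite -eqz_nat !PoszD !PoszM; apply/eqP.
  apply/eqP; rewrite -subr_eq0; apply/eqP.
  by rewrite opprD addrACA -mulrBr H mulNr addNr.
move: Hm E; rewrite -!multE -!plusE => /eqP; rewrite /minn.
move/ssrnat.leP: NP => ?.
case: ifP => /ssrnat.leP ? /eqP ? ?; split; apply/ssrnat.leP; nia.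
Qed.

Lemma pairing_ldivN (e : pt) (u v : lmon) :
  pairing e (ldiv u v) = - pairing e (ldiv v u).
Proof.
rewrite /pairing /ldiv /= -(opprB u.1.1) -(opprB u.1.2) -(opprB u.2).
by rewrite !intrN !mulrN !opprD !opprK.
Qed.

Lemma pairing_lscale (e : pt) (k : int) (w : lmon) :
  pairing e (lscale k w) = k%:~R * pairing e w.
Proof.
rewrite /pairing /lscale /= !intrM !mulrDr.
by rewrite (mulrCA e.1.1) (mulrCA e.1.2) (mulrCA e.2).
Qed.

Theorem lemma2p1 (G : seq gelt) (HG : diag_SL3_group G)
  (S : seq triangle) (HS : triangulation G S) (HY : GHilb_family G S)
  (e f g g' : pt) (Hsig : tri_in S e f g) (Hsig' : tri_in S e f g')
  (Hgg : g != g')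
  (m m' : nmon) (Hcarve : carved G e f m m')
  (Hlab : 0 < pairing g (ldiv (toL m') (toL m)))
  (r r' : nmon) (Hr : Ggraph_elt G e f g r) (Hr' : Ggraph_elt G e f g' r')
  (Hchi : samechar G (toL r) (toL r'))
  (Hne : r != r') :
  mdvd m r /\ mdvd m' r'.
Proof.
have Hs' : samechar G (toL r') (toL r) by move=> h hh; rewrite Hchi.
have [e1 f1 g1] := Hr r' Hs'.
have [e2 f2 _] := Hr' r Hchi.
rewrite pairing_ldivN oppr_ge0 in e2.
rewrite pairing_ldivN oppr_ge0 in f2.
have e0 : pairing e (ldiv (toL r') (toL r)) = 0 by apply/le_anti; rewrite e1 e2.
have f0 : pairing f (ldiv (toL r') (toL r)) = 0 by apply/le_anti; rewrite f1 f2.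
case: Hcarve => Hcop HM _ _ Hspan.
have [k Hk] := Hspan _ (@samechar_inM G _ _ HG Hs') e0 f0.
move: g1; rewrite Hk pairing_lscale (pairing_ldivN g (toL m)) mulrN oppr_ge0 => g1.
have [n Hn] : exists n : nat, k = - (n.+1)%:Z.
  case: k Hk g1 => [[|n]|n] Hk g1.
  - exfalso; move: Hk Hne; clear.
    case: r => [[r1 r2] r3]; case: r' => [[s1 s2] s3].
    rewrite /ldiv /lscale /toL /= !mul0r => -[].
    move=> /eqP; rewrite subr_eq0 eqz_nat => /eqP->.
    move=> /eqP; rewrite subr_eq0 eqz_nat => /eqP->.
    move=> /eqP; rewrite subr_eq0 eqz_nat => /eqP->.
    by rewrite eqxx.
  - by move: g1; rewrite leNgt mulr_gt0 // ltr0z.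
  - by exists n; rewrite NegzE.
subst k; move: Hcop Hk; clear.
case: r => [[r1 r2] r3]; case: r' => [[s1 s2] s3].
case: m => [[m1 m2] m3]; case: m' => [[n1 n2] n3].
rewrite /mcoprime /mdvd /ldiv /lscale /toL /= => -[c1 c2 c3] [] H1 H2 H3.
have [? ?] := coord _ _ _ _ _ c1 H1; have [? ?] := coord _ _ _ _ _ c2 H2; have [? ?] := coord _ _ _ _ _ c3 H3.
by split; split.
Qed.
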